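(* Let $\Omega$ be a metric space, $\mathcal{FV}(\Omega)$ a dom-space and $T\colon\mathcal{FV}(\Omega)\to\mathcal{CC}(\Omega)$ continuous and linear. Then the map $\delta\circ T\colon\Omega\to\mathcal{FV}(\Omega)'_\gamma$, $x\mapsto\delta_x\circ T$, is well-defined and Cauchy continuous.
   Context: $\mathbb{K}\in\{\mathbb{R},\mathbb{C}\}$. A map between metric/uniform spaces is Cauchy continuous if it maps Cauchy sequences to Cauchy sequences; $\mathcal{CC}(\Omega)$ is the space of Cauchy continuous $\mathbb{K}$-valued functions on $\Omega$ with the topology of uniform convergence on precompact subsets of $\Omega$. $\mathcal{FV}(\Omega)'_\gamma$: dual with the topology of uniform convergence on precompact subsets. $(\delta_x\circ T)(f):=T(f)(x)$. Framework: $J,M$ non-empty index sets, $(\omega_m)_{m\in M}$ non-empty sets, $\nu_{j,m}\colon\omega_m\to[0,\infty)$ such that for all $m$, $x\in\omega_m$ some $\nu_{j,m}(x)>0$; $\operatorname{AP}(\Omega)\subset\mathbb{K}^\Omega$ a linear subspace; $T_m\colon\operatorname{dom}T_m\to\mathbb{K}^{\omega_m}$ linear maps on linear subspaces of $\mathbb{K}^\Omega$; $\mathcal{FV}(\Omega):=\{f\in\operatorname{AP}(\Omega)\cap\bigcap_m\operatorname{dom}T_m: |f|_{j,m}:=\sup_{x\in\omega_m}|T_m(f)(x)|\nu_{j,m}(x)<\infty\ \forall j,m\}$ with these seminorms. It is a dom-space if it is Hausdorff, the seminorms are directed and every $\delta_x\colon f\mapsto f(x)$ belongs to $\mathcal{FV}(\Omega)'$.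 *)

(* Defs.v *)
From HB Require Import structures.
From mathcomp Require Import all_boot all_order all_algebra.
From mathcomp Require Import all_classical all_reals all_analysis.
From mathcomp.real_closed Require Import complex.
Set Implicit Arguments. Unset Strict Implicit. Unset Printing Implicit Defensive.
Import Order.TTheory GRing.Theory Num.Theory.
Local Open Scope classical_set_scope.
Local Open Scope ring_scope.

Definition Kscal (R : realType) (b : bool) : numFieldType :=
  if b then (R : numFieldType) else (R[i] : numFieldType).

Definition knorm (R : realType) (b : bool) : Kscal R b -> R :=
  match b as b0 return Kscal R b0 -> R with
  | true => fun x : R => `|x|
  | false => fun z : R[i] => ComplexField.Normc.normc z
  end.

Record FVdata (R : realType) (b : bool) (Omega : Type) := {
  Jidx : Type;
  Midx : Type;
  om : Midx -> Type;
  nu : Jidx -> forall m : Midx, om m -> R;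
  AP : (Omega -> Kscal R b) -> Prop;
  domT : Midx -> (Omega -> Kscal R b) -> Prop;
  Tm : forall m : Midx, (Omega -> Kscal R b) -> om m -> Kscal R b
}.
Arguments Jidx {R b Omega} d : rename.
Arguments Midx {R b Omega} d : rename.
Arguments om {R b Omega} d m : rename.
Arguments nu {R b Omega} d j m x : rename.
Arguments AP {R b Omega} d f : rename.
Arguments domT {R b Omega} d m f : rename.
Arguments Tm {R b Omega} d m f x : rename.

Section Framework.
Variables (R : realType) (b : bool) (Omega : Type).
Local Notation K := (Kscal R b).
Variable D : FVdata R b Omega.

Definition fzero : Omega -> K := fun _ => 0.
Definition fadd (f g : Omega -> K) : Omega -> K := fun x => f x + g x.
Definition fsub (f g : Omega -> K) : Omega -> K := fun x => f x - g x.
Definition fscale (a : K) (f : Omega -> K) : Omega -> K := fun x => a * f x.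

Definition lin_subspace (P : (Omega -> K) -> Prop) :=
  P fzero /\ (forall f g, P f -> P g -> P (fadd f g)) /\
  (forall a f, P f -> P (fscale a f)).

Definition FVframework : Prop :=
  inhabited (Jidx D) /\ inhabited (Midx D) /\
  (forall m, inhabited (om D m)) /\
  (forall j m x, 0 <= nu D j m x) /\
  (forall m x, exists j, 0 < nu D j m x) /\
  lin_subspace (AP D) /\
  (forall m, lin_subspace (domT D m)) /\
  (forall m f g, domT D m f -> domT D m g ->
     Tm D m (fadd f g) = (fun x => Tm D m f x + Tm D m g x)) /\
  (forall m a f, domT D m f -> Tm D m (fscale a f) = (fun x => a * Tm D m f x)).

Definition inFV (f : Omega -> K) : Prop :=
  AP D f /\ (forall m, domT D m f) /\
  (forall j m, exists C : R, forall x : om D m,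
     knorm (Tm D m f x) * nu D j m x <= C).

Definition snorm (j : Jidx D) (m : Midx D) (f : Omega -> K) : R :=
  sup [set knorm (Tm D m f x) * nu D j m x | x in [set: om D m]].

Definition snorm_max (s : seq (Jidx D * Midx D)) (f : Omega -> K) : R :=
  \big[Num.max/0]_(p <- s) snorm p.1 p.2 f.

(* phi belongs to the (topological) dual FV(Omega)': phi is linear on
   FV(Omega) and continuous w.r.t. the locally convex topology generated by
   the seminorms |.|_{j,m}. *)
Definition in_dual (phi : (Omega -> K) -> K) : Prop :=
  (forall f g, inFV f -> inFV g -> phi (fadd f g) = phi f + phi g) /\
  (forall a f, inFV f -> phi (fscale a f) = a * phi f) /\
  (exists (s : seq (Jidx D * Midx D)) (C : R), forall f, inFV f ->
     knorm (phi f) <= C * snorm_max s f).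

Definition dom_space : Prop :=
  (forall f, inFV f -> (forall j m, snorm j m f = 0) -> f = fzero) /\
  (forall j1 m1 j2 m2, exists j m (C : R), 0 < C /\ forall f, inFV f ->
     Num.max (snorm j1 m1 f) (snorm j2 m2 f) <= C * snorm j m f) /\
  (forall x : Omega, in_dual (fun f => f x)).

Definition FV_precompact (B : set (Omega -> K)) : Prop :=
  B `<=` inFV /\
  forall (s : seq (Jidx D * Midx D)) (e : R), 0 < e ->
    exists (n : nat) (g : nat -> (Omega -> K)),
      (forall i, (i < n)%N -> inFV (g i)) /\
      forall f, B f -> exists i, (i < n)%N /\ snorm_max s (fsub f (g i)) < e.

End Framework.

Section MetricNotions.
Variables (R : realType) (b : bool) (Omega : pseudoMetricType R).
Local Notation K := (Kscal R b).

Definition K_cauchy (v : nat -> K) : Prop :=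
  forall e : R, 0 < e -> exists N, forall n k, (N <= n)%N -> (N <= k)%N ->
    knorm (v n - v k) < e.

Definition cauchy_continuous (g : Omega -> K) : Prop :=
  forall u : nat -> Omega, cauchy (u @ \oo) -> K_cauchy (g \o u).

End MetricNotions.

Section Precompact.
Variables (R : realType) (Omega : pseudoMetricType R).
Definition tot_bounded (A : set Omega) : Prop :=
  forall e : R, 0 < e -> exists (n : nat) (y : nat -> Omega),
    forall x, A x -> exists i, (i < n)%N /\ ball (y i) e x.

End Precompact.

(* Main.v *)
Require Import Defs.
From HB Require Import structures.
From mathcomp Require Import all_boot all_order all_algebra.
From mathcomp Require Import all_classical all_reals all_analysis.
From mathcomp.real_closed Require Import complex.
From mathcomp Require Import lra.
Import Order.TTheory GRing.Theory Num.Theory.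
Local Open Scope classical_set_scope.
Local Open Scope ring_scope.
Lemma knorm_ge0 (R : realType) (b : bool) (x : Kscal R b) : 0 <= knorm x.
Proof. case: b x => [x|[a c]] /=; first exact: normr_ge0. exact: sqrtr_ge0. Qed.

Lemma knormD (R : realType) (b : bool) (x y : Kscal R b) : knorm (x + y) <= knorm x + knorm y.
Proof. case: b x y => x y /=; first exact: ler_normD. exact: le_normcD. Qed.

Lemma knormN (R : realType) (b : bool) (x : Kscal R b) : knorm (- x) = knorm x.
Proof. case: b x => x /=; first exact: normrN. exact: normcN. Qed.

Lemma knormB (R : realType) (b : bool) (x y : Kscal R b) : knorm (x - y) <= knorm x + knorm y.
Proof. by rewrite -(knormN _ _ y) knormD. Qed.

Lemma fin_max (P : nat -> nat -> Prop) n0 :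
  (forall i N N', P i N -> (N <= N')%N -> P i N') ->
  (forall i, (i < n0)%N -> exists N, P i N) -> exists N, forall i, (i < n0)%N -> P i N.
Proof.
move=> mono; elim: n0 => [|n IH] H; first by exists 0%N.
have [N1 HN1] := IH (fun i hi => H i (ltnW (leq_trans hi (leqnn _)) )).
have [N2 HN2] := H n (ltnSn n).
exists (maxn N1 N2) => i; rewrite ltnS leq_eqVlt => /orP[/eqP->|hi].
  by apply: mono HN2 _; rewrite leq_maxr.
by apply: mono (HN1 i hi) _; rewrite leq_maxl.
Qed.

Lemma fsubE (R : realType) (b : bool) (Omega : Type) (f g : Omega -> Kscal R b) :
  fsub f g = fadd f (fscale (-1) g).
Proof. by apply/funext => x; rewrite /fsub /fadd /fscale mulN1r. Qed.

Lemma inFV_N (R : realType) (b : bool) (Omega : Type) (D : FVdata R b Omega) g :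
  FVframework D -> inFV D g -> inFV D (fscale (-1) g).
Proof.
move=> [_ [_ [_ [nu0 [_ [[_ [_ APs]] [doms [_ TmZ]]]]]]]] [APg [domg bg]].
split; first exact: APs.
split; first by move=> m; have [_ [_ ?]] := doms m; auto.
move=> j m; have [C HC] := bg j m; exists C => x.
by rewrite TmZ // mulN1r knormN.
Qed.

Lemma inFV_D (R : realType) (b : bool) (Omega : Type) (D : FVdata R b Omega) f g :
  FVframework D -> inFV D f -> inFV D g -> inFV D (fadd f g).
Proof.
move=> [_ [_ [_ [nu0 [_ [[_ [APa _]] [doms [TmD _]]]]]]]] [APf [domf bf]] [APg [domg bg]].
split; first exact: APa.
split; first by move=> m; have [_ [? _]] := doms m; auto.
move=> j m; have [C1 HC1] := bf j m; have [C2 HC2] := bg j m; exists (C1 + C2) => x.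
rewrite TmD //; apply: le_trans (lerD (HC1 x) (HC2 x)).
by rewrite -mulrDl ler_wpM2r // knormD.
Qed.

Lemma inFV_B (R : realType) (b : bool) (Omega : Type) (D : FVdata R b Omega) f g :
  FVframework D -> inFV D f -> inFV D g -> inFV D (fsub f g).
Proof. by move=> H hf hg; rewrite fsubE; apply: inFV_D => //; apply: inFV_N. Qed.

Lemma snorm_max_ge0 (R : realType) (b : bool) (Omega : Type) (D : FVdata R b Omega) s f :
  0 <= @snorm_max R b Omega D s f.
Proof.
rewrite /snorm_max; elim: s => [|p s IH]; first by rewrite big_nil.
by rewrite big_cons le_max IH orbT.
Qed.

Lemma cauchy_tb (R : realType) (Omega : pseudoMetricType R) (u : nat -> Omega) :
  cauchy (u @ \oo) -> tot_bounded (range u).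
Proof.
move=> /cauchyP hc e e0.
have [x hx] := hc e e0.
case: hx => N _ HN.
exists N.+1, (fun i => if (i < N)%N then u i else x).
move=> _ [m _ <-].
case: (ltnP m N) => hm.
  by exists m; split; [exact: ltnW|rewrite hm; exact: ballxx].
by exists N; split => //; rewrite ltnn; apply: HN.
Qed.

Lemma rearr (V : zmodType) (a c d e : V) : a + c - (d + e) = a + (c - e) - d.
Proof. by rewrite opprD !addrA [RHS]addrAC. Qed.
Theorem lemma4p5 (R : realType) (b : bool) (Omega : pseudoMetricType R)
  (D : FVdata R b Omega)
  (T : (Omega -> Kscal R b) -> (Omega -> Kscal R b)) :
  (* Omega is a metric space *)
  hausdorff_space Omega ->
  (* FV(Omega) is a dom-space *)
  FVframework D -> dom_space D ->
  (* T : FV(Omega) -> CC(Omega) *)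
  (forall f, inFV D f -> cauchy_continuous (T f)) ->
  (* T is linear *)
  (forall f g, inFV D f -> inFV D g -> T (fadd f g) = fadd (T f) (T g)) ->
  (forall a f, inFV D f -> T (fscale a f) = fscale a (T f)) ->
  (* T is continuous (CC(Omega) carries the topology of uniform convergence
     on precompact subsets of Omega) *)
  (forall A : set Omega, tot_bounded A ->
     exists (s : seq (Jidx D * Midx D)) (C : R), forall f, inFV D f ->
       forall x, A x -> knorm (T f x) <= C * snorm_max s f) ->
  (* delta o T : Omega -> FV(Omega)'_gamma is well-defined ... *)
  (forall x : Omega, in_dual D (fun f => T f x)) /\
  (* ... and Cauchy continuous: it maps Cauchy sequences of Omega to Cauchy
     sequences of FV(Omega)'_gamma (uniform convergence on precompact sets) *)
  (forall u : nat -> Omega, cauchy (u @ \oo) ->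
     forall B : set (Omega -> Kscal R b), FV_precompact D B ->
     forall e : R, 0 < e -> exists N : nat, forall n k,
       (N <= n)%N -> (N <= k)%N ->
       forall f, B f -> knorm (T f (u n) - T f (u k)) < e).
Proof.
move=> _ HFW _ HCC HTD HTZ Hcont.
have HTB : forall f g, inFV D f -> inFV D g -> forall y, T (fsub f g) y = T f y - T g y.
  move=> f g hf hg y; rewrite fsubE HTD //; last exact: inFV_N.
  by rewrite /fadd HTZ // /fscale mulN1r.
split.
  move=> x; split; first by move=> f g hf hg; rewrite HTD.
  split; first by move=> a f hf; rewrite HTZ.
  have tb : tot_bounded [set x].
    move=> e e0; exists 1%N, (fun _ => x) => y ->; exists 0%N; split => //.
    exact: ballxx.
  have [s [C HC]] := Hcont _ tb.
  by exists s, C => f hf; apply: HC.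
move=> u hu B [BFV Bpc] e e0.
have [s [C HC]] := Hcont _ (cauchy_tb _ _ _ hu).
pose e' := e / 3 / (`|C| + 1).
have C1 : 0 < `|C| + 1 by rewrite ltr_pwDr.
have e'0 : 0 < e' by rewrite /e' !divr_gt0.
have [n0 [g [gFV gcov]]] := Bpc s e' e'0.
have [N HN] : exists N, forall i, (i < n0)%N -> forall n k, (N <= n)%N -> (N <= k)%N ->
    knorm (T (g i) (u n) - T (g i) (u k)) < e / 3.
  apply: (@fin_max (fun i N => forall n k, (N <= n)%N -> (N <= k)%N ->
    knorm (T (g i) (u n) - T (g i) (u k)) < e / 3)).
    move=> i N1 N2 H h12 n k hn hk; apply: H; exact: leq_trans h12 _.
  move=> i hi; have := HCC _ (gFV i hi) u hu (e / 3).
  by rewrite divr_gt0 //; move=> /(_ isT) [N HN]; exists N.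
exists N => n k hn hk f Bf.
have [i [hi hfi]] := gcov f Bf.
have hFV := inFV_B _ _ _ _ _ _ HFW (BFV f Bf) (gFV i hi).
have bnd : forall y, range u y -> knorm (T (fsub f (g i)) y) < e / 3.
  move=> y uy; apply: le_lt_trans (HC _ hFV y uy) _.
  have sm0 := @snorm_max_ge0 R b Omega D s (fsub f (g i)).
  apply: (@le_lt_trans _ _ (`|C| * e')).
    apply: le_trans (ler_wpM2r sm0 (ler_norm C)) _.
    by apply: ler_wpM2l => //; apply: ltW.
  have -> : e / 3 = (`|C| + 1) * e' by rewrite /e' [RHS]mulrC divfK // gt_eqF.
  by rewrite ltr_pM2r // ltrDl.
have Tf : forall y, T f y = T (fsub f (g i)) y + T (g i) y.
  move=> y; rewrite HTB; [by rewrite subrK | exact: BFV | exact: gFV].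
rewrite !Tf.
have -> : T (fsub f (g i)) (u n) + T (g i) (u n) - (T (fsub f (g i)) (u k) + T (g i) (u k))
  = T (fsub f (g i)) (u n) + (T (g i) (u n) - T (g i) (u k)) - T (fsub f (g i)) (u k).
  exact: rearr.
apply: le_lt_trans (knormB _ _ _ _) _.
apply: le_lt_trans (lerD (knormD _ _ _ _) (lexx _)) _.
have -> : e = e / 3 + e / 3 + e / 3.
  lra.
rewrite ltrD // ?ltrD //; first by apply: bnd; exists n.
  exact: HN.
by apply: bnd; exists k.
Qed.
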